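(* Let $E\subseteq\mathbb{R}$ and let $f:E\to\mathbb{R}$ be a bounded function which is Abel continuous on $E$. Then $f$ is Cesàro continuous on $E$.
   Context: A sequence $(p_n)_{n\ge0}$ is Abel convergent to $\ell$ if $\sum_{k=0}^{\infty}p_k x^k$ converges for every $0\le x<1$ and $\lim_{x\to 1^-}(1-x)\sum_{k=0}^{\infty}p_k x^k=\ell$. $f$ is Abel continuous on $E$ if for every sequence $(p_n)$ in $E$ Abel convergent to some $\ell\in E$, $(f(p_n))$ is Abel convergent to $f(\ell)$. A sequence $(p_n)_{n\ge0}$ is Cesàro convergent to $\ell$ if $\lim_{n\to\infty}\frac{1}{n+1}\sum_{k=0}^{n}p_k=\ell$. $f$ is Cesàro continuous on $E$ if for every sequence $(p_n)$ in $E$ Cesàro convergent to some $\ell\in E$, $(f(p_n))$ is Cesàro convergent to $f(\ell)$. *)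

(* Defs.v *)
From Stdlib Require Import Reals.
From Coquelicot Require Import Coquelicot.
Open Scope R_scope.

Definition abel_convergent (p : nat -> R) (l : R) : Prop :=
  (forall x : R, 0 <= x < 1 -> ex_series (fun k => p k * x ^ k)) /\
  filterlim (fun x => (1 - x) * Series (fun k => p k * x ^ k))
    (at_left 1) (locally l).

Definition cesaro_convergent (p : nat -> R) (l : R) : Prop :=
  is_lim_seq (fun n => sum_f_R0 p n / INR (S n)) l.

Definition abel_continuous_on (E : R -> Prop) (f : R -> R) : Prop :=
  forall (p : nat -> R) (l : R), (forall n, E (p n)) -> E l ->
    abel_convergent p l -> abel_convergent (fun n => f (p n)) (f l).

Definition cesaro_continuous_on (E : R -> Prop) (f : R -> R) : Prop :=
  forall (p : nat -> R) (l : R), (forall n, E (p n)) -> E l ->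
    cesaro_convergent p l -> cesaro_convergent (fun n => f (p n)) (f l).

Definition bounded_on (E : R -> Prop) (f : R -> R) : Prop :=
  exists M : R, forall x, E x -> Rabs (f x) <= M.

(* Main.v *)
Require Import Defs.
From Stdlib Require Import Reals Lra Lia Classical.
From Coquelicot Require Import Coquelicot.
Open Scope R_scope.

Definition phi (s : R) (n : nat) : R := frac_part (INR n * s).
Definition ee (s : R) (n : nat) : R := s + phi s n - phi s (S n).

Lemma ee01 s n : 0 <= s < 1 -> ee s n = 0 \/ ee s n = 1.
Proof.
  intros Hs. unfold ee, phi, frac_part. rewrite S_INR.
  set (a := INR n * s).
  replace ((INR n + 1) * s) with (a + s) by (unfold a; ring).
  destruct (base_Int_part a) as [A1 A2].
  destruct (base_Int_part (a + s)) as [B1 B2].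
  set (A := Int_part a) in *. set (B := Int_part (a + s)) in *.
  assert (H1 : IZR (B - A) < IZR 2) by (rewrite minus_IZR; simpl; lra).
  assert (H2 : IZR (-1) < IZR (B - A)) by (rewrite minus_IZR; simpl; lra).
  apply lt_IZR in H1. apply lt_IZR in H2.
  assert (Hk : (B - A = 0 \/ B - A = 1)%Z) by lia.
  destruct Hk as [H|H]; [left|right]; apply (f_equal IZR) in H;
    rewrite minus_IZR in H; simpl in H; lra.
Qed.

Lemma phi_bnd s n : 0 <= phi s n < 1.
Proof. unfold phi. destruct (base_fp (INR n * s)). lra. Qed.

Lemma phi0 s : phi s 0 = 0.
Proof. unfold phi. simpl. rewrite Rmult_0_l. apply fp_R0. Qed.

Lemma ex_series_bnd (u : nat -> R) M x :
  (forall n, Rabs (u n) <= M) -> 0 <= x < 1 -> ex_series (fun k => u k * x ^ k).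
Proof.
  intros HM Hx.
  apply (@ex_series_le R_AbsRing R_CompleteNormedModule _ (fun k => M * x ^ k)).
  - intros n. change (norm (u n * x ^ n)) with (Rabs (u n * x ^ n)).
    rewrite Rabs_mult. rewrite (Rabs_pos_eq (x ^ n)) by (apply pow_le; lra).
    apply Rmult_le_compat_r; [apply pow_le; lra| apply HM].
  - exists (M * / (1 - x)). apply (is_series_scal_l M (fun k => x ^ k)).
    apply is_series_geom. rewrite Rabs_pos_eq; lra.
Qed.

Lemma geom_series x : 0 <= x < 1 -> Series (fun k => x ^ k) = / (1 - x).
Proof. intros Hx. apply is_series_unique. apply is_series_geom.
  rewrite Rabs_pos_eq; lra. Qed.

Lemma at_left_lim (g : R -> R) (l : R) (C : R) :
  (forall x, 1/2 < x < 1 -> Rabs (g x - l) <= C * (1 - x)) ->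
  filterlim g (at_left 1) (locally l).
Proof.
  intros H. apply filterlim_locally. intros eps.
  assert (Hp : 0 < Rmin (1/2) (eps / (Rabs C + 1))).
  { apply Rmin_pos; [lra|]. apply Rdiv_lt_0_compat; [apply cond_pos|].
    pose proof (Rabs_pos C); lra. }
  exists (mkposreal _ Hp). intros y Hy Hy1. simpl in Hy.
  change (ball 1 (Rmin (1 / 2) (eps / (Rabs C + 1))) y) in Hy.
  unfold ball in Hy; simpl in Hy; unfold AbsRing_ball, abs, minus, plus, opp in Hy;
    simpl in Hy.
  unfold ball; simpl; unfold AbsRing_ball, abs, minus, plus, opp; simpl.
  assert (Hr : Rabs (y + - 1) < 1/2 /\ Rabs (y + - 1) < eps / (Rabs C + 1)).
  { split; eapply Rlt_le_trans; try apply Hy; [apply Rmin_l | apply Rmin_r]. }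
  destruct Hr as [Hr1 Hr2].
  rewrite Rabs_left in Hr1, Hr2 by lra.
  assert (Hx : 1/2 < y < 1) by lra.
  specialize (H y Hx).
  assert (HC : C * (1 - y) <= Rabs C * (1 - y)).
  { apply Rmult_le_compat_r; [lra| apply Rle_abs]. }
  assert (HC2 : Rabs C * (1 - y) < eps).
  { assert (1 - y < eps / (Rabs C + 1)) by lra.
    pose proof (Rabs_pos C).
    apply Rmult_lt_compat_l with (r := Rabs C + 1) in H0; [|lra].
    replace ((Rabs C + 1) * (eps / (Rabs C + 1))) with (pos eps) in H0 by (field; lra).
    nra. }
  unfold Rminus in H. lra.
Qed.

Lemma abel_ext u v L : (forall n, u n = v n) -> abel_convergent u L -> abel_convergent v L.
Proof.
  intros He [H1 H2]. split.
  - intros x Hx. apply (ex_series_ext (fun k => u k * x ^ k)); [intros n; rewrite He; reflexivity|].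
    apply H1; exact Hx.
  - apply (filterlim_ext (fun x => (1 - x) * Series (fun k => u k * x ^ k))); [|exact H2].
    intros x. f_equal. apply Series_ext. intros n; rewrite He; reflexivity.
Qed.

Lemma lim_affine (F : (R -> Prop) -> Prop) (h : R -> R) L a b :
  filterlim h F (locally L) -> filterlim (fun x => a + b * h x) F (locally (a + b * L)).
Proof.
  intros H. apply (filterlim_comp _ _ _ h (fun t => a + b * t) F (locally L)); [exact H|].
  apply (continuity_pt_filterlim (fun t => a + b * t)). reg.
Qed.

Lemma abel_affine u L a b :
  abel_convergent u L -> abel_convergent (fun n => a + b * u n) (a + b * L).
Proof.
  intros [H1 H2]. split.
  - intros x Hx.
    assert (Hg : ex_series (fun k => a * x ^ k)).
    { apply (ex_series_bnd (fun _ => a) (Rabs a)); [intros; lra | exact Hx]. }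
    pose proof (@ex_series_plus R_AbsRing R_NormedModule _ _ Hg
      (@ex_series_scal_l R_AbsRing R_NormedModule b _ (H1 x Hx))) as Hs.
    revert Hs. apply ex_series_ext. intros n. unfold plus, scal; simpl.
    unfold mult; simpl. ring.
  - apply (filterlim_ext_loc (fun x => a + b * ((1 - x) * Series (fun k => u k * x ^ k)))).
    + exists (mkposreal (1/2) ltac:(lra)). intros y Hy Hy1.
      change (ball 1 (1/2) y) in Hy.
      unfold ball in Hy; simpl in Hy; unfold AbsRing_ball, abs, minus, plus, opp in Hy;
        simpl in Hy.
      rewrite Rabs_left in Hy by lra.
      assert (Hx : 0 <= y < 1) by lra.
      assert (Hg : ex_series (fun k => a * y ^ k)).
      { apply (ex_series_bnd (fun _ => a) (Rabs a)); [intros; lra | exact Hx]. }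
      assert (Hb : ex_series (fun k => b * (u k * y ^ k))).
      { apply (@ex_series_scal_l R_AbsRing R_NormedModule b _ (H1 y Hx)). }
      rewrite (Series_ext (fun k => (a + b * u k) * y ^ k) (fun k => a * y ^ k + b * (u k * y ^ k))) by (intros; ring).
      rewrite Series_plus by assumption.
      rewrite Series_scal_l, Series_scal_l, geom_series by exact Hx.
      field. lra.
    + apply lim_affine. exact H2.
Qed.

Lemma abel_ee s : 0 <= s < 1 -> abel_convergent (ee s) s.
Proof.
  intros Hs. split.
  - intros x Hx. apply (ex_series_bnd _ 1); [|exact Hx].
    intros n. destruct (ee01 s n Hs) as [H|H]; rewrite H;
      [rewrite Rabs_R0 | rewrite Rabs_R1]; lra.
  - apply (at_left_lim _ _ 1). intros x Hx1.
    assert (Hx : 0 <= x < 1) by lra.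
    assert (Hphi : ex_series (fun k => phi s k * x ^ k)).
    { apply (ex_series_bnd _ 1); [|exact Hx]. intros n.
      pose proof (phi_bnd s n). rewrite Rabs_pos_eq; lra. }
    assert (Hphi1 : ex_series (fun k => phi s (S k) * x ^ k)).
    { apply (ex_series_bnd _ 1); [|exact Hx]. intros n.
      pose proof (phi_bnd s (S n)). rewrite Rabs_pos_eq; lra. }
    assert (Hg : ex_series (fun k => s * x ^ k)).
    { apply (ex_series_bnd (fun _ => s) (Rabs s)); [intros; lra | exact Hx]. }
    assert (Hgp : ex_series (fun k => s * x ^ k + phi s k * x ^ k)).
    { apply (@ex_series_plus R_AbsRing R_NormedModule _ _ Hg Hphi). }
    rewrite (Series_ext (fun k => ee s k * x ^ k)
      (fun k => (s * x ^ k + phi s k * x ^ k) - phi s (S k) * x ^ k))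
      by (intros; unfold ee; ring).
    rewrite Series_minus by assumption.
    rewrite Series_plus by assumption.
    rewrite Series_scal_l, geom_series by exact Hx.
    assert (HP : Series (fun k => phi s k * x ^ k) = x * Series (fun k => phi s (S k) * x ^ k)).
    { rewrite Series_incr_1 by exact Hphi. rewrite phi0.
      rewrite <- Series_scal_l. rewrite Rmult_0_l, Rplus_0_l.
      apply Series_ext. intros n. simpl. ring. }
    rewrite HP.
    set (P := Series (fun k => phi s (S k) * x ^ k)).
    assert (HP0 : 0 <= P).
    { assert (Z : Series (fun _ : nat => 0) = 0).
      { rewrite (Series_ext _ (fun n => 0 * x ^ n)) by (intros; ring).
        rewrite Series_scal_l. ring. }
      rewrite <- Z. unfold P. apply Series_le; [|exact Hphi1].
      intros n. pose proof (phi_bnd s (S n)). split; [lra|].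
      apply Rmult_le_pos; [lra| apply pow_le; lra]. }
    assert (HP1 : P <= / (1 - x)).
    { rewrite <- geom_series by exact Hx. unfold P. apply Series_le.
      - intros n. pose proof (phi_bnd s (S n)). pose proof (pow_le x n ltac:(lra)).
        split; [apply Rmult_le_pos; lra|]. nra.
      - exists (/ (1 - x)). apply is_series_geom. rewrite Rabs_pos_eq; lra. }
    assert (HP2 : (1 - x) * P <= 1).
    { assert (H0 : (1 - x) * P <= (1 - x) * / (1 - x)) by (apply Rmult_le_compat_l; lra).
      rewrite Rinv_r in H0 by lra. exact H0. }
    replace ((1 - x) * (s * / (1 - x) + x * P - P) - s) with (- ((1 - x) * ((1 - x) * P)))
      by (field; lra).
    rewrite Rabs_Ropp. rewrite Rabs_pos_eq.
    + nra.
    + apply Rmult_le_pos; [lra|]. apply Rmult_le_pos; lra.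
Qed.

Lemma triple (E : R -> Prop) (f : R -> R) x y z :
  abel_continuous_on E f -> E x -> E y -> E z -> x < y < z ->
  (f y - f x) * (z - x) = (f z - f x) * (y - x).
Proof.
  intros Hab Ex Ey Ez Hxyz.
  set (s := (y - x) / (z - x)).
  assert (Hs : 0 <= s < 1).
  { unfold s. split.
    - apply Rmult_le_pos; [lra|]. left; apply Rinv_0_lt_compat; lra.
    - apply (Rmult_lt_reg_r (z - x)); [lra|]. field_simplify; lra. }
  set (p := fun n => x + (z - x) * ee s n).
  assert (Hp : forall n, E (p n)).
  { intros n. unfold p. destruct (ee01 s n Hs) as [H|H]; rewrite H.
    - replace (x + (z - x) * 0) with x by ring; exact Ex.
    - replace (x + (z - x) * 1) with z by ring; exact Ez. }
  assert (Hpa : abel_convergent p y).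
  { replace y with (x + (z - x) * s) by (unfold s; field; lra).
    apply abel_affine. apply abel_ee; exact Hs. }
  pose proof (Hab p y Hp Ey Hpa) as H1.
  assert (H2 : abel_convergent (fun n => f (p n)) (f x + (f z - f x) * s)).
  { apply (abel_ext (fun n => f x + (f z - f x) * ee s n)).
    - intros n. unfold p. destruct (ee01 s n Hs) as [H|H]; rewrite H.
      + replace (x + (z - x) * 0) with x by ring; ring.
      + replace (x + (z - x) * 1) with z by ring; ring.
    - apply abel_affine. apply abel_ee; exact Hs. }
  destruct H1 as [_ H1]. destruct H2 as [_ H2].
  pose proof (filterlim_locally_unique _ _ _ H1 H2) as Heq.
  rewrite Heq. unfold s. field. lra.
Qed.

Ltac close_lin T := match type of T with ?U = ?V =>
  apply Rminus_diag_uniq; first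
  [ transitivity (U - V); [ring | apply Rminus_diag_eq; exact T]
  | transitivity (-(U - V)); [ring | rewrite (Rminus_diag_eq _ _ T); ring] ] end.

Lemma collinear (E : R -> Prop) (f : R -> R) a b c :
  abel_continuous_on E f -> E a -> E b -> E c -> a <> b -> a <> c -> b <> c ->
  (f b - f a) * (c - a) = (f c - f a) * (b - a).
Proof.
  intros Hab Ea Eb Ec Hab' Hac Hbc.
  destruct (Rtotal_order a b) as [H1|[H1|H1]]; [|contradiction|];
  destruct (Rtotal_order a c) as [H2|[H2|H2]]; try contradiction;
  destruct (Rtotal_order b c) as [H3|[H3|H3]]; try contradiction;
  first
  [ lra
  | let T := fresh in pose proof (triple E f a b c Hab Ea Eb Ec ltac:(lra)) as T; close_lin T
  | let T := fresh in pose proof (triple E f a c b Hab Ea Ec Eb ltac:(lra)) as T; close_lin T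
  | let T := fresh in pose proof (triple E f b a c Hab Eb Ea Ec ltac:(lra)) as T; close_lin T
  | let T := fresh in pose proof (triple E f c a b Hab Ec Ea Eb ltac:(lra)) as T; close_lin T
  | let T := fresh in pose proof (triple E f b c a Hab Eb Ec Ea ltac:(lra)) as T; close_lin T
  | let T := fresh in pose proof (triple E f c b a Hab Ec Eb Ea ltac:(lra)) as T; close_lin T ].
Qed.

Theorem theorem6 (E : R -> Prop) (f : R -> R) :
  bounded_on E f -> abel_continuous_on E f -> cesaro_continuous_on E f.
Proof.
  intros _ Hab p l Hp El Hc.
  assert (Hlin : exists a, forall w, E w -> f w = f l + a * (w - l)).
  { destruct (classic (exists u, E u /\ u <> l)) as [[u [Eu Hu]]|Hno].
    - exists ((f u - f l) / (u - l)). intros w Ew.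
      assert (Hul : u - l <> 0) by lra.
      destruct (Req_dec w l) as [->|Hwl]; [ring|].
      destruct (Req_dec w u) as [->|Hwu]; [field; exact Hul|].
      pose proof (collinear E f l u w Hab El Eu Ew (not_eq_sym Hu) (not_eq_sym Hwl)
        (not_eq_sym Hwu)) as H.
      replace (f w) with (f l + (f w - f l) * (u - l) / (u - l)) by (field; exact Hul).
      rewrite <- H. field. exact Hul.
    - exists 0. intros w Ew. destruct (Req_dec w l) as [->|Hwl]; [ring|].
      exfalso. apply Hno. exists w. split; assumption. }
  destruct Hlin as [a Ha].
  unfold cesaro_convergent in *.
  assert (Hs : forall n, sum_f_R0 (fun k => f (p k)) n =
    INR (S n) * f l + a * (sum_f_R0 p n - INR (S n) * l)).
  { intros n. rewrite (sum_eq _ (fun k => f l + a * (p k - l))) by (intros; apply Ha, Hp).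
    induction n as [|n IH].
    - simpl. ring.
    - simpl sum_f_R0. rewrite IH. rewrite (S_INR (S n)). ring. }
  assert (HL : is_lim_seq (fun n => f l + a * (sum_f_R0 p n / INR (S n) - l))
                 (f l + a * (l - l))).
  { apply is_lim_seq_plus'; [apply is_lim_seq_const|].
    apply (is_lim_seq_scal_l _ a (l - l)).
    apply is_lim_seq_minus'; [exact Hc| apply is_lim_seq_const]. }
  replace (f l + a * (l - l)) with (f l) in HL by ring.
  revert HL. apply is_lim_seq_ext. intros n. rewrite Hs.
  field. apply not_0_INR. discriminate.
Qed.
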